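(* Let $n\ge2$, $t>0$ and $\bm{N}=(t,0,\ldots,0,-t)\in\mathbb{R}^{n+1}$. Then the uniform average of the vertices of $\mathcal{F}_n(\bm{N})$ is the flow $\bm{f}$ given by \[ f_{0,n}=t\,2^{-(n-1)},\quad f_{0,k}=t\,2^{-k}\ (1\le k\le n-1),\quad f_{i,n}=t\,2^{-(n-i)}\ (1\le i\le n-1),\quad f_{i,k}=t\,2^{-(k-i+1)}\ (1\le i<k\le n-1). \] Equivalently, it is represented by $t$ times the $n\times n$ matrix $A=(a_{ij})_{0\le i,j\le n-1}$ with $a_{00}=2^{-(n-1)}$, $a_{0j}=2^{-(n-j)}$ for $j\ge1$, $a_{i0}=2^{-(n-i)}$ for $i\ge1$, $a_{ij}=2^{-(n-i-j+1)}$ for $i,j\ge1$, $i+j<n$, $a_{i,n-i}=\tfrac12$ for $1\le i\le n-1$, and $a_{ij}=0$ for $i+j>n$.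
   Context: $\mathcal{F}_n(\bm{N})$ is the polytope of $\bm{f}=(f_{ij})_{0\le i<j\le n}\in\mathbb{R}_{\ge0}^{\binom{n+1}{2}}$ with $\sum_{j>i} f_{ij}-\sum_{k<i} f_{ki}=N_i$ for every $i\in\{0,\ldots,n\}$. The matrix form of $\bm f$ is $(a_{ij})$ with $a_{ij}=f_{i,n-j}$ for $i+j\le n-1$, $a_{i,n-i}=\sum_{k<i}(N_k-f_{k,i})$ for $1\le i\le n-1$, zero otherwise. The uniform average of vertices is the arithmetic mean of the vertices. *)

(* Defs.v *)
From HB Require Import structures.
From mathcomp Require Import all_boot all_order all_algebra.
Set Implicit Arguments. Unset Strict Implicit. Unset Printing Implicit Defensive.
Import Order.TTheory GRing.Theory Num.Theory.
Local Open Scope ring_scope.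

Notation edge n := {p : 'I_n.+1 * 'I_n.+1 | (p.1 < p.2)%N}.

Notation flow R n := {ffun edge n -> R}.

Definition in_flow_polytope (R : realFieldType) (n : nat) (N : 'I_n.+1 -> R)
    (f : flow R n) : Prop :=
  (forall e, 0 <= f e) /\
  (forall i : 'I_n.+1,
     \sum_(e : edge n | (val e).1 == i) f e
     - \sum_(e : edge n | (val e).2 == i) f e = N i).

Definition is_vertex (R : realFieldType) (n : nat) (P : flow R n -> Prop)
    (f : flow R n) : Prop :=
  P f /\
  forall (g h : flow R n) (l : R), P g -> P h -> 0 < l -> l < 1 ->
    (forall e, f e = l * g e + (1 - l) * h e) -> g = h.

Definition Nvec (R : realFieldType) (n : nat) (t : R) (i : 'I_n.+1) : R :=
  if val i == 0%N then t else if val i == n then - t else 0.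

Definition favg (R : realFieldType) (n : nat) (t : R) : flow R n :=
  [ffun e : edge n =>
     let i := val (val e).1 in let k := val (val e).2 in
     if i == 0%N then
       (if k == n then t * 2 ^- (n - 1) else t * 2 ^- k)
     else
       (if k == n then t * 2 ^- (n - i) else t * 2 ^- (k - i + 1))].

(* f_{ij} as a function of natural indices (0 outside the edge set). *)
Definition fval (R : realFieldType) (n : nat) (f : flow R n) (i j : nat) : R :=
  odflt 0 (omap f (insub (inord i, inord j) : option (edge n))).

Definition matrix_form (R : realFieldType) (n : nat) (N : 'I_n.+1 -> R)
    (f : flow R n) : 'M[R]_n :=
  \matrix_(i < n, j < n)
    if (i + j <= n - 1)%N then fval f i (n - j)
    else if (i + j == n)%N && (1 <= i)%N then
      \sum_(k < n.+1 | (k < i)%N) (N k - fval f k i)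
    else 0.

Definition Amat (R : realFieldType) (n : nat) : 'M[R]_n :=
  \matrix_(i < n, j < n)
    if (i == 0%N :> nat) && (j == 0%N :> nat) then 2 ^- (n - 1)
    else if (i == 0%N :> nat) then 2 ^- (n - j)
    else if (j == 0%N :> nat) then 2 ^- (n - i)
    else if (i + j < n)%N then 2 ^- (n - i - j + 1)
    else if (i + j == n)%N then 2^-1
    else 0.

(* Main.v *)
Require Import Defs.
From HB Require Import structures.
From mathcomp Require Import all_boot all_order all_algebra.
From mathcomp Require Import zify ring lra.
Set Implicit Arguments. Unset Strict Implicit. Unset Printing Implicit Defensive.
Import Order.TTheory GRing.Theory Num.Theory.
Local Open Scope ring_scope.


Definition onpath (n : nat) (T : {ffun 'I_n.+1 -> bool}) (e : edge n) : bool :=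
  [&& T (val e).1, T (val e).2 &
   [forall m : 'I_n.+1, (((val e).1 < m)%N && (m < (val e).2)%N) ==> ~~ T m]].

Definition pflow (R : realFieldType) (n : nat) (t : R) (T : {ffun 'I_n.+1 -> bool}) : flow R n :=
  [ffun e => if onpath T e then t else 0].

Definition valid (n : nat) (T : {ffun 'I_n.+1 -> bool}) : bool := T ord0 && T ord_max.

Lemma edge_eq n (e e' : edge n) : (val e).1 = (val e').1 -> (val e).2 = (val e').2 -> e = e'.
Proof.
move=> h1 h2; apply/val_inj; move: h1 h2; case: (val e) => a b; case: (val e') => c d /= -> -> //.
Qed.

Lemma U1 n T (e e' : edge n) : onpath T e -> onpath T e' -> (val e).1 = (val e').1 -> e = e'.
Proof.
move=> /and3P[_ h2 /forallP h3] /and3P[_ h2' /forallP h3'] E.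
have he := valP e; have he' := valP e'.
apply: edge_eq => //; apply/val_inj/eqP; rewrite eqn_leq; apply/andP; split; rewrite leqNgt; apply/negP => lt.
- by move: (h3 (val e').2); rewrite E lt he' /= h2'.
- by move: (h3' (val e).2); rewrite -E lt he /= h2.
Qed.

Lemma U2 n T (e e' : edge n) : onpath T e -> onpath T e' -> (val e).2 = (val e').2 -> e = e'.
Proof.
move=> /and3P[h1 _ /forallP h3] /and3P[h1' _ /forallP h3'] E.
have he := valP e; have he' := valP e'.
apply: edge_eq => //; apply/val_inj/eqP; rewrite eqn_leq; apply/andP; split; rewrite leqNgt; apply/negP => lt.
- by move: (h3' (val e).1); rewrite -E lt he /= h1.
- by move: (h3 (val e').1); rewrite E lt he' /= h1'.
Qed.

Lemma nxtE n (T : {ffun 'I_n.+1 -> bool}) (i : 'I_n.+1) :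
  T i -> T ord_max -> i != ord_max -> exists e : edge n, onpath T e && ((val e).1 == i).
Proof.
move=> Ti Tn ni.
have P0 : (i < (@ord_max n))%N && T ord_max.
  rewrite Tn andbT; have := ltn_ord i; move: ni; rewrite -(inj_eq val_inj) /=; lia.
case: (@arg_minnP _ ord_max (fun j : 'I_n.+1 => (i < j)%N && T j) (fun j : 'I_n.+1 => nat_of_ord j) P0) => j /andP[ij Tj] minj.
exists (exist _ (i, j) ij); rewrite /= eqxx andbT /onpath /= Ti Tj /=.
apply/forallP => m; apply/implyP => /andP[im mj]; apply/negP => Tm.
by move: (minj m); rewrite im Tm => /(_ isT); rewrite leqNgt mj.
Qed.

Lemma prvE n (T : {ffun 'I_n.+1 -> bool}) (i : 'I_n.+1) :
  T i -> T ord0 -> i != ord0 -> exists e : edge n, onpath T e && ((val e).2 == i).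
Proof.
move=> Ti T0 ni.
have P0 : ((@ord0 n) < i)%N && T ord0.
  rewrite T0 andbT; move: ni; rewrite -(inj_eq val_inj) /=; lia.
case: (@arg_maxnP _ ord0 (fun j : 'I_n.+1 => (j < i)%N && T j) (fun j : 'I_n.+1 => nat_of_ord j) P0) => j /andP[ij Tj] maxj.
exists (exist _ (j, i) ij); rewrite /= eqxx andbT /onpath /= Ti Tj /=.
apply/forallP => m; apply/implyP => /andP[im mj]; apply/negP => Tm.
by move: (maxj m); rewrite mj Tm => /(_ isT) /=; lia.
Qed.


Lemma out_sum (R : realFieldType) n (t : R) (T : {ffun 'I_n.+1 -> bool}) (i : 'I_n.+1) : T ord_max ->
  \sum_(e : edge n | (val e).1 == i) pflow t T e = if T i && (i != ord_max) then t else 0.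
Proof.
move=> Tn; case: ifP => [/andP[Ti ni]|H].
- have [e0 /andP[oe0 se0]] := nxtE Ti Tn ni.
  rewrite (bigD1 e0) //= big1 ?addr0 ?ffunE ?oe0 //.
  move=> e /andP[se ne]; rewrite ffunE; case: ifP => // oe.
  by move/eqP: ne => ne; exfalso; apply: ne; apply: (U1 oe oe0); rewrite (eqP se) (eqP se0).
- apply: big1 => e /eqP se; rewrite ffunE; case: ifP => // /and3P[Ti _ _].
  move: H; rewrite -se Ti /=; have := valP e; have := ltn_ord (val e).2.
  rewrite -(inj_eq val_inj) /=; lia.
Qed.

Lemma in_sum (R : realFieldType) n (t : R) (T : {ffun 'I_n.+1 -> bool}) (i : 'I_n.+1) : T ord0 ->
  \sum_(e : edge n | (val e).2 == i) pflow t T e = if T i && (i != ord0) then t else 0.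
Proof.
move=> T0; case: ifP => [/andP[Ti ni]|H].
- have [e0 /andP[oe0 se0]] := prvE Ti T0 ni.
  rewrite (bigD1 e0) //= big1 ?addr0 ?ffunE ?oe0 //.
  move=> e /andP[se ne]; rewrite ffunE; case: ifP => // oe.
  by move/eqP: ne => ne; exfalso; apply: ne; apply: (U2 oe oe0); rewrite (eqP se) (eqP se0).
- apply: big1 => e /eqP se; rewrite ffunE; case: ifP => // /and3P[_ Ti _].
  move: H; rewrite -se Ti /=; have := valP e.
  rewrite -(inj_eq val_inj) /=; lia.
Qed.

Lemma pflow_in (R : realFieldType) n (t : R) (T : {ffun 'I_n.+1 -> bool}) : (1 <= n)%N -> 0 <= t -> valid T ->
  in_flow_polytope (Nvec t) (pflow t T).
Proof.
move=> n1 t0 /andP[T0 Tn]; split.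
  by move=> e; rewrite ffunE; case: ifP.
move=> i; rewrite out_sum // in_sum // /Nvec -!(inj_eq val_inj) /=.
case: (T i =P true) => Ti.
- rewrite Ti /=; have [i0|i0] := eqVneq (i : nat) 0%N.
  + by rewrite i0 /= eq_sym (gtn_eqF n1) /= subr0.
  + have [iN|iN] := eqVneq (i : nat) n.
      by rewrite /= sub0r.
    by rewrite /= subrr.
- have -> : T i = false by apply/negbTE/negP.
  have [i0|i0] := eqVneq (i : nat) 0%N.
    by case: Ti; rewrite (_ : i = ord0) //; apply/val_inj.
  have [iN|iN] := eqVneq (i : nat) n.
    by case: Ti; rewrite (_ : i = ord_max) //; apply/val_inj.
  by rewrite /= subrr.
Qed.


Lemma convex0 (R : realFieldType) (a b l : R) : 0 <= a -> 0 <= b -> 0 < l -> l < 1 ->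
  l * a + (1 - l) * b = 0 -> a = 0 /\ b = 0.
Proof.
move=> a0 b0 l0 l1 E.
have h1 : 0 <= l * a by apply: mulr_ge0; lra.
have h2 : 0 <= (1 - l) * b by apply: mulr_ge0; lra.
have la : l * a = 0 by lra.
have lb : (1 - l) * b = 0 by lra.
move: la lb => /eqP; rewrite mulf_eq0 => /orP[/eqP|/eqP ->]; first lra.
move/eqP; rewrite mulf_eq0 => /orP[/eqP|/eqP ->]; first lra.
by [].
Qed.

Lemma pflow_vertex (R : realFieldType) n (t : R) (T : {ffun 'I_n.+1 -> bool}) :
  (1 <= n)%N -> 0 < t -> valid T -> is_vertex (in_flow_polytope (Nvec t)) (pflow t T).
Proof.
move=> n1 t0 vT; split; first by apply: pflow_in => //; lra.
move=> g h l [g0 gc] [h0 hc] l0 l1 E.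
have off : forall e, ~~ onpath T e -> g e = 0 /\ h e = 0.
  move=> e oe; apply: (convex0 (g0 e) (h0 e) l0 l1); by rewrite -E ffunE (negbTE oe).
have main : forall k, forall e, onpath T e -> (val (val e).1 <= k)%N -> g e = h e.
  have core : forall e, onpath T e ->
      (forall e', onpath T e' -> (val (val e').1 < val (val e).1)%N -> g e' = h e') -> g e = h e.
    move=> e oe IH; set i := (val e).1.
    have := gc i; have := hc i.
    have outE : forall f : flow R n, (forall e', ~~ onpath T e' -> f e' = 0) ->
        \sum_(e' : edge n | (val e').1 == i) f e' = f e.
      move=> f fz; rewrite (bigD1 e) //= big1 ?addr0 // => e' /andP[se ne]; apply: fz.
      apply/negP => oe'; move/eqP: ne; apply; apply: (U1 oe' oe); exact/eqP.
    rewrite (outE g) ?(outE h); try by move=> e' /off [].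
    have -> : \sum_(e' : edge n | (val e').2 == i) g e' = \sum_(e' : edge n | (val e').2 == i) h e'.
      apply: eq_bigr => e' /eqP de'; case oe': (onpath T e').
        by apply: IH => //; move: (valP e'); rewrite de'.
      by have [-> ->] := off e' (negbT oe').
    move=> <- /eqP; rewrite subr_eq addrNK => /eqP //.
  elim=> [|k IH] e oe le; apply: core => // e' oe' lt.
    by move: lt le; lia.
  by apply: IH => //; move: lt le; lia.
apply/ffunP => e; case oe: (onpath T e).
  by apply: (main _ e oe).
by have [-> ->] := off e (negbT oe).
Qed.


Lemma pos_term (R : realFieldType) (I : finType) (P : pred I) (F : I -> R) :
  0 < \sum_(i | P i) F i -> exists i, P i && (0 < F i).
Proof.
move=> H; case: (boolP [exists i, P i && (0 < F i)]) => [/existsP//|/existsPn K].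
have : \sum_(i | P i) F i <= 0.
  apply: sumr_le0 => i Pi; move: (K i); rewrite Pi /= -leNgt //.
by rewrite leNgt H.
Qed.

Lemma build_path (R : realFieldType) n (t : R) (f : flow R n) :
  in_flow_polytope (Nvec t) f ->
  forall d (i : 'I_n.+1), (n - i <= d)%N ->
  (i == ord_max) || (0 < \sum_(e : edge n | (val e).1 == i) f e) ->
  exists T : {ffun 'I_n.+1 -> bool},
    [/\ T i, T ord_max, (forall m, T m -> (i <= m)%N) & (forall e, onpath T e -> 0 < f e)].
Proof.
move=> [f0 fc] d.
have base : exists T : {ffun 'I_n.+1 -> bool},
    [/\ T ord_max, T ord_max, (forall m, T m -> ((@ord_max n) <= m)%N) & (forall e, onpath T e -> 0 < f e)].
  exists [ffun m => m == ord_max]; split; rewrite ?ffunE ?eqxx //.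
    by move=> m; rewrite ffunE => /eqP ->.
  move=> e /and3P[]; rewrite !ffunE => /eqP h1 /eqP h2; have := valP e; rewrite h1 h2 ltnn //.
elim: d => [|d IH] i le H.
  have -> : i = ord_max by apply/val_inj; have := ltn_ord i; move: le => /=; lia.
  exact: base.
case: (eqVneq i ord_max) => [->|ni]; first exact: base.
rewrite (negbTE ni) /= in H.
have [e /andP[/eqP se fe]] := pos_term H.
set j := (val e).2.
have ij : (i < j)%N by rewrite -se; exact: (valP e).
have Hj : (j == ord_max) || (0 < \sum_(e : edge n | (val e).1 == j) f e).
  case: eqVneq => //= nj; have := fc j; rewrite /Nvec.
  have -> : (j == 0%N :> nat) = false by apply/negbTE; move: ij; lia.
  have -> : (j == n :> nat) = false by apply/negbTE; move: nj; rewrite -(inj_eq val_inj).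
  move/eqP; rewrite subr_eq0 => /eqP ->.
  rewrite (bigD1 e) //=; apply: (lt_le_trans fe); rewrite lerDl; apply: sumr_ge0 => *; exact: f0.
have [T' [Tj Tn Tmin Tpos]] := IH j (ltac:(move: le ij; lia)) Hj.
exists [ffun m => (m == i) || T' m]; split.
- by rewrite ffunE eqxx.
- by rewrite ffunE Tn orbT.
- move=> m; rewrite ffunE => /orP[/eqP->//|/Tmin]; move: ij; lia.
move=> e' /and3P[]; rewrite !ffunE => Ta Tb /forallP Hb.
have he' := valP e'.
case: (eqVneq (val e').1 i) => [sa|sa].
- suff -> : e' = e by [].
  apply: edge_eq; first by rewrite sa se.
  apply/val_inj/eqP; rewrite eqn_leq; apply/andP; split; rewrite leqNgt; apply/negP => lt.
  + move: (Hb j); rewrite ffunE Tj orbT lt sa ij /=; by [].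
  + move: Tb => /orP[/eqP h|/Tmin]; last by rewrite leqNgt lt.
    by move: he'; rewrite h sa ltnn.
- rewrite (negbTE sa) /= in Ta.
  apply: Tpos; rewrite /onpath Ta /=.
  have -> : T' (val e').2.
    move: Tb => /orP[/eqP h|//]; exfalso; have := Tmin _ Ta; move: he' ij; rewrite /= h; lia.
  apply/forallP => m; apply/implyP => bm; move: (Hb m); rewrite bm ffunE /=; by case: (T' m); rewrite ?orbT.
Qed.


Lemma delta (R : realFieldType) (I : finType) (P : pred I) (F : I -> R) :
  (forall i, P i -> 0 < F i) -> exists2 d, 0 < d & forall i, P i -> d <= F i.
Proof.
move=> Fp.
suff [d d0 Hd] : exists2 d, 0 < d & forall i, i \in enum I -> P i -> d <= F i.
  by exists d => // i; apply: Hd; rewrite mem_enum.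
elim: (enum I) => [|x s [d d0 Hd]]; first by exists 1.
case Px: (P x).
- exists (Num.min d (F x)); first by rewrite lt_min d0 Fp.
  move=> i; rewrite in_cons => /orP[/eqP->|ins] Pi; rewrite ge_min.
    by rewrite lexx orbT.
  by rewrite Hd.
- exists d => // i; rewrite in_cons => /orP[/eqP->|ins] Pi; first by rewrite Px in Pi.
  exact: Hd.
Qed.

Lemma alg (R : realFieldType) (a b c d N l : R) : l < 1 -> a - b = N -> c - d = N ->
  (a - l * c) / (1 - l) - (b - l * d) / (1 - l) = N.
Proof.
move=> l1 e1 e2.
have ea : a = N + b by rewrite -e1; ring.
have ec : c = N + d by rewrite -e2; ring.
rewrite ea ec; field; apply/eqP; lra.
Qed.

Lemma vertex_path (R : realFieldType) n (t : R) (f : flow R n) : (1 <= n)%N -> 0 < t ->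
  is_vertex (in_flow_polytope (Nvec t)) f -> exists T, valid T /\ f = pflow t T.
Proof.
move=> n1 t0 [fin vert].
have fin' := fin; case: fin' => f0 fc.
have out0 : 0 < \sum_(e : edge n | (val e).1 == ord0) f e.
  have in0 : \sum_(e : edge n | (val e).2 == ord0) f e = 0.
    by apply: big1 => e /eqP h; have := valP e; rewrite h.
  by have := fc ord0; rewrite /Nvec /= in0 subr0 => ->.
have [T [T0 Tn _ Tpos]] := build_path fin (leqnn (n - (@ord0 n))) (introT orP (or_intror out0)).
have vT : valid T by rewrite /valid T0 Tn.
have [d d0 Hd] := delta Tpos.
set l := Num.min (d / t) (1/2).
have l0 : 0 < l by rewrite lt_min divr_gt0 //=; lra.
have lh : l <= 1/2 by rewrite /l ge_min lexx orbT.
have l1 : l < 1 by lra.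
have lt : l * t <= d by rewrite -ler_pdivlMr // /l ge_min lexx.
have l1' : 1 - l != 0 by apply/eqP; lra.
pose g : flow R n := [ffun e => (f e - l * pflow t T e) / (1 - l)].
have sumg : forall P : pred (edge n), \sum_(e | P e) g e =
    (\sum_(e | P e) f e - l * \sum_(e | P e) pflow t T e) / (1 - l).
  move=> P; under eq_bigr => e _ do rewrite ffunE.
  by rewrite -mulr_suml sumrB mulr_sumr.
have pin := pflow_in n1 (ltW t0) vT.
have gin : in_flow_polytope (Nvec t) g.
  split.
    move=> e; rewrite ffunE; apply: divr_ge0; last lra.
    rewrite subr_ge0 ffunE; case: ifP => oe; last by rewrite mulr0 f0.
    exact: (le_trans lt (Hd e oe)).
  move=> i; rewrite !sumg; apply: alg; [exact: l1 | exact: fc | exact: pin.2].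
have E : forall e, f e = l * pflow t T e + (1 - l) * g e.
  by move=> e; rewrite [g e]ffunE [(1 - l) * _]mulrC mulfVK //; ring.
have pg := vert _ _ _ pin gin l0 l1 E.
exists T; split => //; apply/ffunP => e.
have : g e = pflow t T e by rewrite -pg.
rewrite ffunE => /(congr1 (fun x => x * (1 - l))); rewrite mulfVK // => E2.
apply/eqP; rewrite -subr_eq0; apply/eqP.
transitivity (f e - l * pflow t T e - pflow t T e * (1 - l)); first ring.
by rewrite E2 subrr.
Qed.


Lemma prod_range (R : realFieldType) (x : R) a b N :
  \prod_(0 <= m < N) (if (a <= m < b)%N then x else 1) = x ^+ (minn N b - a).
Proof.
elim: N => [|N IH]; first by rewrite big_geq // (_ : minn 0 b - a = 0)%N //; lia.
rewrite big_nat_recr //= IH; case: ifP => h.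
  by rewrite (_ : minn N.+1 b - a = (minn N b - a).+1)%N ?exprSr //; move: h; lia.
by rewrite mulr1 (_ : minn N.+1 b - a = (minn N b - a))%N //; move/negbT: h; lia.
Qed.

Lemma forall_prod (R : realFieldType) (I : finType) (P : I -> bool) :
  ([forall m, P m])%:R = \prod_m (P m)%:R :> R.
Proof.
case: (boolP [exists m, ~~ P m]) => [/existsP[m Pm]|/existsPn H].
  have -> : [forall m, P m] = false by apply/negbTE/negP => /forallP /(_ m); rewrite (negbTE Pm).
  by rewrite (bigD1 m) //= (negbTE Pm) mul0r.
have -> : [forall m, P m] by apply/forallP => m; move: (H m); rewrite negbK.
by rewrite big1 // => m _; move: (H m); rewrite negbK => ->.
Qed.

Definition cP n (e : edge n) (m : 'I_n.+1) (b : bool) : bool :=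
  if [|| m == ord0, m == ord_max, m == (val e).1 | m == (val e).2] then b
  else if (((val e).1 < m)%N && (m < (val e).2)%N) then ~~ b else true.
Definition c0 n (m : 'I_n.+1) (b : bool) : bool :=
  if (m == ord0) || (m == ord_max) then b else true.
Definition rr (R : realFieldType) n (e : edge n) (m : 'I_n.+1) : R :=
  if [&& (0 < m)%N, (m < n)%N, ((val e).1 <= m)%N & (m <= (val e).2)%N] then 2^-1 else 1.

Lemma factor (R : realFieldType) n (e : edge n) (m : 'I_n.+1) :
  \sum_b (cP e m b)%:R = (\sum_b (c0 m b)%:R) * rr R e m.
Proof.
have he : ((sval e).1 < (sval e).2)%N := valP e.
have hk := ltn_ord (sval e).2; have hm := ltn_ord m.
rewrite !big_bool /cP /c0 /rr -!(inj_eq (@ord_inj _)) /=.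
case: ifPn => H1.
  case: ifPn => H2.
    rewrite ifF; first by rewrite /= mulr1.
    by apply/negbTE; move: H2; lia.
  rewrite ifT; first by rewrite /=; field.
  by move: H1 H2; lia.
have -> : ((m == 0%N :> nat) || (m == n :> nat)) = false by apply/negbTE; move: H1; lia.
case: ifPn => H3.
  rewrite ifT; first by rewrite /=; field.
  by move: H1 H3; lia.
rewrite ifF; first by rewrite /= mulr1.
by apply/negbTE; move: H1 H3; lia.
Qed.

Lemma valid_all n (T : {ffun 'I_n.+1 -> bool}) : valid T = [forall m, c0 m (T m)].
Proof.
apply/idP/forallP.
  move=> /andP[T0 Tn] m; rewrite /c0; case: ifPn => // /orP[]/eqP -> //.
move=> H; have := H ord0; have := H ord_max; rewrite /c0 !eqxx orbT /= => Tn T0.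
by rewrite /valid T0 Tn.
Qed.

Lemma cond_all n (e : edge n) (T : {ffun 'I_n.+1 -> bool}) :
  valid T && onpath T e = [forall m, cP e m (T m)].
Proof.
apply/idP/forallP.
  move=> /andP[/andP[T0 Tn] /and3P[Ti Tk /forallP H]] m; rewrite /cP.
  case: ifPn => [/or4P[]/eqP -> //|_]; case: ifPn => // b; exact: (implyP (H m) b).
move=> H; have := H ord0; have := H ord_max; have := H (sval e).1; have := H (sval e).2.
rewrite /cP !eqxx !orbT /= => Tk Ti Tn T0.
rewrite /valid T0 Tn /onpath Ti Tk /=; apply/forallP => m; apply/implyP => b.
have := H m; rewrite /cP.
have he : ((sval e).1 < (sval e).2)%N := valP e.
have hk := ltn_ord (sval e).2.
have -> : [|| m == ord0, m == ord_max, m == (sval e).1 | m == (sval e).2] = false.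
  by apply/negbTE; rewrite -!(inj_eq (@ord_inj _)) /=; move: b he hk; lia.
by rewrite b.
Qed.

Lemma avg (R : realFieldType) n (t : R) (e : edge n) :
  (#|@valid n|%:R)^-1 * \sum_(T in @valid n) pflow t T e = favg n t e.
Proof.
have cardE : #|@valid n|%:R = \prod_(m : 'I_n.+1) \sum_b (c0 m b)%:R :> R.
  transitivity (\sum_(T : {ffun 'I_n.+1 -> bool}) \prod_m (c0 m (T m))%:R : R).
    rewrite -sum1_card natr_sum big_mkcond; apply: eq_bigr => T _.
    rewrite -forall_prod -valid_all.
    have -> : (T \in @valid n) = valid T by [].
    by case: (valid T).
  by rewrite bigA_distr_bigA.
have sumE : \sum_(T in @valid n) pflow t T e = (\prod_m \sum_b (cP e m b)%:R) * t.
  transitivity (\sum_(T : {ffun 'I_n.+1 -> bool}) (\prod_m (cP e m (T m))%:R) * t).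
    rewrite big_mkcond; apply: eq_bigr => T _; rewrite -forall_prod -cond_all ffunE.
    have -> : (T \in @valid n) = valid T by [].
    by case: (valid T); case: (onpath T e); rewrite /= ?mul1r ?mul0r.
  by rewrite -mulr_suml bigA_distr_bigA.
rewrite cardE sumE; under eq_bigr do rewrite factor.
rewrite big_split /=.
set B := \prod_m _.
have B0 : B != 0.
  rewrite gt_eqF // /B; apply: prodr_gt0 => m _; rewrite big_bool /c0.
  by case: ifP => _; rewrite /=; lra.
rewrite -!mulrA mulKf //.
set i := (sval e).1; set k := (sval e).2.
have he : (i < k)%N := valP e.
have hk := ltn_ord k.
rewrite (eq_bigr (fun m : 'I_n.+1 => (fun j : nat => if (maxn 1 i <= j < minn n k.+1)%N then 2^-1 else 1) (nat_of_ord m))); last first.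
  move=> m _; rewrite /rr; have hm := ltn_ord m.
  have -> : [&& (0 < m)%N, (m < n)%N, ((sval e).1 <= m)%N & (m <= (sval e).2)%N] =
    (maxn 1 i <= m < minn n k.+1)%N.
    by apply/idP/idP; rewrite /i /k; lia.
  by [].
rewrite -(@big_mkord R 1 *%R n.+1 (fun _ => true) (fun j : nat => if (maxn 1 i <= j < minn n k.+1)%N then 2^-1 else 1)).
rewrite prod_range exprVn /favg ffunE /= -/i -/k.
case: eqVneq => [i0|i0]; case: eqVneq => [kn|kn]; rewrite mulrC; congr (_ * _ ^- _); move: he hk i0 kn; lia.
Qed.


Definition fv (R : realFieldType) n (t : R) (i j : nat) : R :=
  if i == 0%N then (if j == n then t * 2 ^- (n - 1) else t * 2 ^- j)
  else (if j == n then t * 2 ^- (n - i) else t * 2 ^- (j - i + 1)).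

Lemma fvalE (R : realFieldType) n (t : R) i j : (i < j)%N -> (j <= n)%N ->
  fval (favg n t) i j = fv n t i j.
Proof.
move=> ij jn.
have H : ((inord i : 'I_n.+1) < (inord j : 'I_n.+1))%N.
  by rewrite !inordK //; lia.
rewrite /fval; case: insubP => [e _ ve|]; last by rewrite /= H.
by rewrite /= ffunE /= ve /= !inordK //; lia.
Qed.

Lemma geom (R : realFieldType) a : (1 <= a)%N ->
  \sum_(0 <= k < a) (if k == 0%N then 2 ^- a else 2 ^- (a - k + 1)) = 2^-1 :> R.
Proof.
elim: a => [//|a IH] _.
case: a IH => [_|a IH]; first by rewrite big_nat1.
rewrite big_nat_recr //=.
have -> : \sum_(0 <= k < a.+1) (if k == 0%N then 2 ^- a.+2 else 2 ^- (a.+2 - k + 1)) =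
    2^-1 * \sum_(0 <= k < a.+1) (if k == 0%N then 2 ^- a.+1 else 2 ^- (a.+1 - k + 1)) :> R.
  rewrite mulr_sumr; apply: eq_big_nat => k /andP[_ hk].
  case: eqP => _; rewrite -invfM -exprS //.
  by rewrite (_ : (a.+2 - k + 1 = (a.+1 - k + 1).+1)%N) //; lia.
rewrite IH // (_ : (a.+2 - a.+1 + 1 = 2)%N); last lia.
by field.
Qed.

Lemma matrix_eq (R : realFieldType) n (t : R) : (2 <= n)%N ->
  matrix_form (Nvec t) (favg n t) = t *: Amat R n.
Proof.
move=> n2; apply/matrixP => a b; rewrite !mxE.
have ha := ltn_ord a; have hb := ltn_ord b.
case: ifP => h1.
  rewrite fvalE; [|lia|lia]; rewrite /fv.
  have [a0|a0] := eqVneq (a : nat) 0%N; have [b0|b0] := eqVneq (b : nat) 0%N.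
  - by rewrite b0 subn0 eqxx.
  - by rewrite ifF //; apply/negbTE; move: b0 hb; lia.
  - by rewrite b0 subn0 eqxx.
  - rewrite ifF; last by apply/negbTE; move: b0 hb; lia.
    rewrite ifT; last lia.
    by rewrite (_ : (n - b - a = n - a - b)%N) //; lia.
have -> : (a == 0%N :> nat) = false by apply/negbTE; move: h1 hb; lia.
have -> : (b == 0%N :> nat) = false by apply/negbTE; move: h1 ha; lia.
have -> : (a + b < n)%N = false by apply/negbTE; move: h1; lia.
case: ifP => h2; last first.
  by rewrite ifF ?mulr0 //; apply/negbTE; move: h1 h2; lia.
rewrite ifT; last by move: h2; lia.
move/andP: h2 => [/eqP hab a1].
have an : (a < n)%N by move: hab hb a1; lia.
rewrite sumrB.
have -> : \sum_(k < n.+1 | (k < a)%N) Nvec t k = t.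
  rewrite (bigD1 ord0) //= big1 ?addr0; first by rewrite /Nvec.
  move=> k /andP[ka k0]; rewrite /Nvec.
  have -> : (k == 0%N :> nat) = false.
    by apply/negbTE; move: k0; rewrite -(inj_eq (@ord_inj _)).
  have -> : (k == n :> nat) = false by apply/negbTE; move: ka an; lia.
  by [].
pose F := fun j : nat => t * (if j == 0%N then 2 ^- a else 2 ^- (a - j + 1)).
have -> : \sum_(k < n.+1 | (k < a)%N) fval (favg n t) k a = t * 2^-1.
  transitivity (\sum_(k < n.+1 | (k < a)%N) F k).
    apply: eq_bigr => k ka; rewrite fvalE //; last lia.
    rewrite /fv /F (_ : (a == n :> nat) = false); last by apply/negbTE; move: an; lia.
    by case: (k == 0%N :> nat).
  rewrite -(@big_mkord R 0 +%R n.+1 (fun k => (k < a)%N) F).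
  transitivity (\sum_(0 <= k < a) F k).
    rewrite [RHS](big_nat_widen 0 a n.+1); last lia.
    by apply: eq_bigl.
  by rewrite /F -mulr_sumr geom.
by field.
Qed.


Lemma pflow_inj (R : realFieldType) n (t : R) (T T' : {ffun 'I_n.+1 -> bool}) :
  t != 0 -> valid T -> valid T' -> pflow t T = pflow t T' -> T = T'.
Proof.
move=> tn0 vT vT' E.
have key : forall (A B : {ffun 'I_n.+1 -> bool}) m, valid A -> valid B ->
    pflow t A = pflow t B -> A m -> B m.
  move=> A B m /andP[A0 An] /andP[B0 Bn] EAB Am; apply/idPn => Bm.
  have nm : m != ord_max by apply/eqP => h; move: Bm; rewrite h Bn.
  have [e /andP[oe /eqP se]] := nxtE Am An nm.
  have := congr1 (fun f : flow R n => f e) EAB; rewrite /= !ffunE oe.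
  have -> : onpath B e = false by apply/negbTE; rewrite /onpath se (negbTE Bm).
  by move/eqP; rewrite (negbTE tn0).
apply/ffunP => m; apply/idP/idP; [exact: key | exact: (key T' T)].
Qed.

Theorem proposition4p2 (R : realFieldType) (n : nat) (t : R) :
  (2 <= n)%N -> 0 < t ->
  exists s : seq (flow R n),
    [/\ uniq s,
        (forall g, g \in s <-> is_vertex (in_flow_polytope (Nvec t)) g),
        (forall e, (size s)%:R^-1 * \sum_(g <- s) g e = favg n t e)
      & matrix_form (Nvec t) (favg n t) = t *: Amat R n].
Proof.
move=> n2 t0.
have n1 : (1 <= n)%N by apply: ltnW.
have tn0 : t != 0 by rewrite gt_eqF.
exists [seq pflow t T | T <- enum (@valid n)]; split.
- rewrite map_inj_in_uniq ?enum_uniq // => T T'; rewrite !mem_enum => vT vT'.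
  exact: pflow_inj.
- move=> g; split.
    by case/mapP => T; rewrite mem_enum => vT ->; apply: pflow_vertex.
  move=> /(vertex_path n1 t0) [T [vT ->]]; apply/mapP; exists T => //.
  by rewrite mem_enum.
- move=> e; rewrite size_map -cardE big_map big_enum /=.
  exact: avg.
- exact: matrix_eq.
Qed.
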